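(* For each $n\ge0$, the functor $\tau_n\colon\mathsf{cSet}^+\to\mathsf{cSet}^+$ is a left Quillen functor from the $n$-trivial comical model structure to the comical model structure.
   Context: Cubical sets are presheaves on the box category $\square$ (objects $[1]^n=\{0<1\}^n$; morphisms generated by faces $\partial_{i,\varepsilon}$, degeneracies $\sigma_i$ and max/min connections $\gamma_{i,1},\gamma_{i,0}$); a cube is degenerate if it is $x\sigma_i$ or $x\gamma_{i,\varepsilon}$; faces have unique normal forms $\partial_{k_1,\varepsilon_1}\cdots\partial_{k_t,\varepsilon_t}$ with $k_1>\dots>k_t$. A marked cubical set is a cubical set with marked cubes of positive dimension containing all degenerate cubes; maps preserve marked cubes; category $\mathsf{cSet}^+$. $\tau_n X$ has the same underlying cubical set as $X$, with a $k$-cube marked iff it is marked in $X$ or $k\ge n+1$; $\tau_n$ is left adjoint to the functor taking the maximal $n$-trivial sub-object. $\square^m_{k,\varepsilon}$ ($m\ge1$, $1\le k\le m$) is $\square^m$ with a non-degenerate positive-dimensional face in normal form marked iff none of its factors is $\partial_{k-1,\varepsilon},\partial_{k,0},\partial_{k,1},\partial_{k+1,\varepsilon}$; $\sqcap^m_{k,\varepsilon}$ is the open box (union of codimension-one faces other than $\partial_{k,\varepsilon}$) with regular marking; $(\square^m_{k,\varepsilon})''=\tau_{m-2}\square^m_{k,\varepsilon}$ and $(\square^m_{k,\varepsilon})'$ is $\square^m_{k,\varepsilon}$ with all $(m-1)$-faces other than $\partial_{k,\varepsilon}$ marked ($m\ge2$). $\widetilde\square^m$ is $\square^m$ (minimally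 marked) with the top cube marked. A set of trivial cofibrations is pseudo-generating if every map with fibrant codomain having the right lifting property against it is a fibration. The comical model structure on $\mathsf{cSet}^+$: cofibrations are the monomorphisms, and the comical open box inclusions $\sqcap^m_{k,\varepsilon}\hookrightarrow\square^m_{k,\varepsilon}$ and elementary comical marking extensions $(\square^m_{k,\varepsilon})'\hookrightarrow(\square^m_{k,\varepsilon})''$ form a pseudo-generating set of trivial cofibrations. The $n$-trivial comical model structure: cofibrations are the monomorphisms, and the comical open box inclusions, the elementary comical marking extensions of dimension $m\le n+1$, and the markers $\square^m\to\widetilde\square^m$ with $m>n$ form a pseudo-generating set of trivial cofibrations. *)

(* Defs.v *)
From HB Require Import structures.
From mathcomp Require Import all_boot.
From mathcomp Require Import zify.
From Stdlib Require Import ProofIrrelevance FunctionalExtensionality.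
Set Implicit Arguments. Unset Strict Implicit. Unset Printing Implicit Defensive.

(* Vertices of [1]^n are n-tuples of booleans; coordinates are         *)
(* numbered 1..n.  Generators acting on bit lists:                     *)
(*   face_s k e : inserts e as new coordinate k   (d_{k,e})             *)
(*   degen_s i  : deletes coordinate i            (sigma_i)             *)
(*   conn_s i e : merges coordinates i,i+1 by max (e = true) or min     *)
(*                (e = false)                      (gamma_{i,e})         *)

Definition face_s (k : nat) (e : bool) (s : seq bool) : seq bool :=
  take k.-1 s ++ e :: drop k.-1 s.
Definition degen_s (i : nat) (s : seq bool) : seq bool :=
  take i.-1 s ++ drop i s.
Definition conn_s (i : nat) (e : bool) (s : seq bool) : seq bool :=
  take i.-1 s ++
   (if e then nth false s i.-1 || nth false s i
         else nth false s i.-1 && nth false s i) :: drop i.+1 s.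

Inductive is_box : nat -> nat -> (seq bool -> seq bool) -> Prop :=
| box_id m : is_box m m (@id (seq bool))
| box_face m k e : 0 < k <= m.+1 -> is_box m m.+1 (face_s k e)
| box_degen m i : 0 < i <= m.+1 -> is_box m.+1 m (degen_s i)
| box_conn m i e : 0 < i <= m.+1 -> is_box m.+2 m.+1 (conn_s i e)
| box_comp l m n g h : is_box l m g -> is_box m n h -> is_box l n (h \o g).

Definition is_box_map m n (f : {ffun m.-tuple bool -> n.-tuple bool}) : Prop :=
  exists2 g, is_box m n g & forall t, val (f t) = g (val t).

Definition boxHom m n := {f : {ffun m.-tuple bool -> n.-tuple bool} | is_box_map f}.

Lemma bid_proof n : is_box_map [ffun t : n.-tuple bool => t].
Proof. by exists id; [exact: box_id | move=> t; rewrite ffunE]. Qed.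

Definition bid n : boxHom n n := exist _ _ (bid_proof n).

Lemma bcomp_proof l m n (g : boxHom m n) (f : boxHom l m) :
  is_box_map [ffun t => sval g (sval f t)].
Proof.
case: g => g [hg Hg Hgv]; case: f => f [hf Hf Hfv] /=.
exists (hg \o hf); first exact: box_comp Hf Hg.
by move=> t; rewrite ffunE Hgv Hfv.
Qed.

Definition bcomp l m n (g : boxHom m n) (f : boxHom l m) : boxHom l n :=
  exist _ _ (bcomp_proof g f).

Lemma boxHom_eq m n (f g : boxHom m n) : sval f = sval g -> f = g.
Proof.
case: f => f pf; case: g => g pg /= E; subst g; f_equal; apply: proof_irrelevance.
Qed.

Lemma bcomp_id_r m n (g : boxHom m n) : bcomp g (bid m) = g.
Proof. by apply: boxHom_eq; apply/ffunP => t; rewrite /= !ffunE. Qed.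

Lemma bcomp_assoc k l m n (h : boxHom m n) (g : boxHom l m) (f : boxHom k l) :
  bcomp h (bcomp g f) = bcomp (bcomp h g) f.
Proof. by apply: boxHom_eq; apply/ffunP => t; rewrite /= !ffunE. Qed.

Record cSet := CSet {
  cell : nat -> Type;
  act : forall m n, boxHom m n -> cell n -> cell m;
  act_id : forall n (x : cell n), act (bid n) x = x;
  act_comp : forall l m n (f : boxHom l m) (g : boxHom m n) (x : cell n),
      act (bcomp g f) x = act f (act g x) }.

Definition degenerate (X : cSet) n (x : cell X n) : Prop :=
  exists p (y : cell X p) (f : boxHom n p),
    act f y = x /\ n = p.+1 /\
    ((exists i, 0 < i <= n /\ forall t, val (sval f t) = degen_s i (val t)) \/
     (exists i e, 0 < i < n /\ forall t, val (sval f t) = conn_s i e (val t))).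

Lemma degenerate_pos (X : cSet) n (x : cell X n) : degenerate x -> 0 < n.
Proof. by case=> p [y [f [_ [E _]]]]; rewrite E. Qed.

Record mcSet := MCSet {
  ucset :> cSet;
  marked : forall n, cell ucset n -> Prop;
  marked_pos : forall x : cell ucset 0, ~ marked x;
  marked_degen : forall n (x : cell ucset n), degenerate x -> marked x }.

Lemma marked_gt0 (X : mcSet) n (x : cell X n) : marked x -> 0 < n.
Proof. by case: n x => // x /marked_pos. Qed.

Record mmap (X Y : mcSet) := MMap {
  mcomp : forall n, cell X n -> cell Y n;
  mnat : forall m n (f : boxHom m n) (x : cell X n),
      @mcomp m (act f x) = act f (@mcomp n x);
  mmark : forall n (x : cell X n), marked x -> marked (@mcomp n x) }.

Arguments mcomp {X Y} _ _ _.

Definition mid (X : mcSet) : mmap X X :=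
  @MMap X X (fun n x => x) (fun _ _ _ _ => erefl) (fun _ _ h => h).

Definition mcompose (X Y Z : mcSet) (g : mmap Y Z) (f : mmap X Y) : mmap X Z.
Proof.
refine (@MMap X Z (fun n x => mcomp g n (mcomp f n x)) _ _).
- by move=> m n h x; rewrite !mnat.
- by move=> n x hx; apply: mmark; apply: mmark.
Defined.

Definition homeq (X Y : mcSet) (f g : mmap X Y) : Prop :=
  forall n (x : cell X n), mcomp f n x = mcomp g n x.

Definition tau (n : nat) (X : mcSet) : mcSet.
Proof.
refine (@MCSet (ucset X) (fun k x => marked x \/ n.+1 <= k) _ _).
- by move=> x [/marked_pos|].
- by move=> k x hx; left; apply: marked_degen.
Defined.

Definition tau_map (n : nat) (X Y : mcSet) (f : mmap X Y) : mmap (tau n X) (tau n Y).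
Proof.
refine (@MMap (tau n X) (tau n Y) (fun k x => mcomp f k x) (@mnat _ _ f) _).
by move=> k x [hx|hx]; [left; apply: mmark|right].
Defined.

Definition rep (m : nat) : cSet.
Proof.
refine (@CSet (fun n => boxHom n m) (fun p n f g => bcomp g f) _ _).
- by move=> n x; apply: bcomp_id_r.
- by move=> l p n f g x; apply: bcomp_assoc.
Defined.

Definition mark_with (X : cSet) (P : forall n, cell X n -> Prop) : mcSet.
Proof.
refine (@MCSet X (fun n x => 0 < n /\ (degenerate x \/ P n x)) _ _).
- by move=> x [].
- by move=> n x hx; split; [exact: degenerate_pos hx | left].
Defined.

(* d_{k1,e1} ... d_{kt,et} as a composite of maps (d_{kt,et} applied first) *)
Definition face_nf_fun (L : seq (nat * bool)) (s : seq bool) : seq bool :=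
  foldr (fun ke s => face_s ke.1 ke.2 s) s L.

Definition is_face_nf m n (f : boxHom n m) (L : seq (nat * bool)) : Prop :=
  [/\ sorted (fun a b : nat * bool => b.1 < a.1) L,
      all (fun ke : nat * bool => 0 < ke.1 <= m) L,
      n + size L = m &
      forall t, val (sval f t) = face_nf_fun L (val t)].

Definition comical_forbidden (k : nat) (e : bool) (ke : nat * bool) : bool :=
  (ke == (k - 1, e)) || (ke.1 == k) || (ke == (k.+1, e)).

Definition comical_face_marked m k e n (f : boxHom n m) : Prop :=
  exists L, is_face_nf f L /\ ~~ has (comical_forbidden k e) L.

Definition cube (m : nat) : mcSet := mark_with (X := rep m) (fun _ _ => False).

Definition cube_top (m : nat) : mcSet :=
  mark_with (X := rep m) (fun n f => forall t, val (sval f t) = val t).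

Definition cube_k (m k : nat) (e : bool) : mcSet :=
  mark_with (X := rep m) (@comical_face_marked m k e).

Definition cube_k' (m k : nat) (e : bool) : mcSet :=
  mark_with (X := rep m) (fun n f => comical_face_marked k e f \/
     exists j d, (j, d) != (k, e) /\ is_face_nf f [:: (j, d)]).

Definition cube_k'' (m k : nat) (e : bool) : mcSet := tau (m - 2) (cube_k m k e).

Definition in_open_box m k e n (f : boxHom n m) : Prop :=
  exists j d (dd : boxHom m.-1 m) (g : boxHom n m.-1),
    [/\ (j, d) != (k, e), 0 < j <= m,
        (forall t, val (sval dd t) = face_s j d (val t)) & f = bcomp dd g].

Lemma in_open_box_act m k e p n (h : boxHom p n) (f : boxHom n m) :
  in_open_box k e f -> in_open_box k e (bcomp f h).
Proof.
case=> j [d [dd [g [H1 H2 H3 ->]]]].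
by exists j, d, dd, (bcomp g h); split => //; rewrite bcomp_assoc.
Qed.

Definition open_box_cset (m k : nat) (e : bool) : cSet.
Proof.
refine (@CSet (fun n => {f : boxHom n m | in_open_box k e f})
  (fun p n h x => exist _ (bcomp (sval x) h) (in_open_box_act h (svalP x))) _ _).
- move=> n [x px] /=; apply: eq_sig_hprop; first by move=> ?; apply: proof_irrelevance.
  exact: bcomp_id_r.
- move=> l p n f g [x px] /=; apply: eq_sig_hprop; first by move=> ?; apply: proof_irrelevance.
  exact: bcomp_assoc.
Defined.

Definition open_box (m k : nat) (e : bool) : mcSet.
Proof.
refine (@MCSet (open_box_cset m k e)
          (fun n x => @marked (cube_k m k e) n (sval x)) _ _).
- by move=> x [H _].
- move=> n x [p [y [f [Hx [Hn Hf]]]]].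
  apply: (@marked_degen (cube_k m k e) n (sval x)).
  by exists p, (sval y), f; rewrite -Hx.
Defined.

Definition open_box_incl (m k : nat) (e : bool) : mmap (open_box m k e) (cube_k m k e).
Proof.
refine (@MMap (open_box m k e) (cube_k m k e) (fun n x => sval x) _ _).
- by [].
- by move=> n x hx.
Defined.

Definition mark_ext (m k : nat) (e : bool) : mmap (cube_k' m k e) (cube_k'' m k e).
Proof.
refine (@MMap (cube_k' m k e) (cube_k'' m k e) (fun n x => x) (fun _ _ _ _ => erefl) _).
move=> n x [Hn [Hd|[Hc|[j [d [_ [_ _ Hs _]]]]]]].
- by left; split => //; left.
- by left; split => //; right.
- by right; move: Hs => /=; lia.
Defined.

Definition marker (m : nat) : mmap (cube m) (cube_top m).
Proof.
refine (@MMap (cube m) (cube_top m) (fun n x => x) (fun _ _ _ _ => erefl) _).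
by move=> n x [Hn [Hd|[]]]; split => //; left.
Defined.

Definition term_cset : cSet.
Proof.
refine (@CSet (fun _ => unit) (fun _ _ _ _ => tt) _ _).
- by move=> n [].
- by [].
Defined.

Definition term : mcSet.
Proof.
refine (@MCSet term_cset (fun n _ => 0 < n) _ _).
- by [].
- by move=> n x /degenerate_pos.
Defined.

Definition to_term (X : mcSet) : mmap X term.
Proof.
refine (@MMap X term (fun _ _ => tt) (fun _ _ _ _ => erefl) _).
by move=> n x /marked_gt0.
Defined.

Definition mapclass := forall X Y : mcSet, mmap X Y -> Prop.

Definition llp (A B X Y : mcSet) (i : mmap A B) (p : mmap X Y) : Prop :=
  forall (u : mmap A X) (v : mmap B Y),
    homeq (mcompose p u) (mcompose v i) ->
    exists h : mmap B X, homeq (mcompose h i) u /\ homeq (mcompose p h) v.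

Definition retract_of (A B X Y : mcSet) (f : mmap A B) (g : mmap X Y) : Prop :=
  exists (i : mmap A X) (r : mmap X A) (i' : mmap B Y) (r' : mmap Y B),
    [/\ homeq (mcompose r i) (mid A), homeq (mcompose r' i') (mid B),
        homeq (mcompose g i) (mcompose i' f) & homeq (mcompose f r) (mcompose r' g)].

Definition mono (X Y : mcSet) (f : mmap X Y) : Prop :=
  forall (Z : mcSet) (g h : mmap Z X),
    homeq (mcompose f g) (mcompose f h) -> homeq g h.

Record ModelStructure := {
  msW : mapclass;
  msC : mapclass;
  msF : mapclass;
  ms_2of3 : forall (X Y Z : mcSet) (f : mmap X Y) (g : mmap Y Z),
      [/\ msW f -> msW g -> msW (mcompose g f),
          msW f -> msW (mcompose g f) -> msW g &
          msW g -> msW (mcompose g f) -> msW f];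
  ms_retract : forall (A B X Y : mcSet) (f : mmap A B) (g : mmap X Y),
      retract_of f g ->
      [/\ msW g -> msW f, msC g -> msC f & msF g -> msF f];
  ms_lift_tc : forall (A B X Y : mcSet) (i : mmap A B) (p : mmap X Y),
      msC i -> msW i -> msF p -> llp i p;
  ms_lift_tf : forall (A B X Y : mcSet) (i : mmap A B) (p : mmap X Y),
      msC i -> msF p -> msW p -> llp i p;
  ms_fact_tc : forall (X Y : mcSet) (f : mmap X Y),
      exists (Z : mcSet) (i : mmap X Z) (p : mmap Z Y),
        [/\ msC i, msW i, msF p & homeq (mcompose p i) f];
  ms_fact_tf : forall (X Y : mcSet) (f : mmap X Y),
      exists (Z : mcSet) (i : mmap X Z) (p : mmap Z Y),
        [/\ msC i, msF p, msW p & homeq (mcompose p i) f] }.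

Definition fibrant (M : ModelStructure) (X : mcSet) : Prop := msF M (to_term X).

(* The comical model structure: cofibrations = monomorphisms, and the
   open box inclusions and elementary comical marking extensions form a
   pseudo-generating set of trivial cofibrations. *)
Definition is_comical (M : ModelStructure) : Prop :=
  [/\ (forall (X Y : mcSet) (f : mmap X Y), msC M f <-> mono f),
      (forall m k e, 0 < k <= m ->
         msC M (open_box_incl m k e) /\ msW M (open_box_incl m k e)),
      (forall m k e, 1 < m -> 0 < k <= m ->
         msC M (mark_ext m k e) /\ msW M (mark_ext m k e)) &
      (forall (X Y : mcSet) (p : mmap X Y), fibrant M Y ->
         (forall m k e, 0 < k <= m -> llp (open_box_incl m k e) p) ->
         (forall m k e, 1 < m -> 0 < k <= m -> llp (mark_ext m k e) p) ->
         msF M p)].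

Definition is_ntriv_comical (n : nat) (M : ModelStructure) : Prop :=
  [/\ (forall (X Y : mcSet) (f : mmap X Y), msC M f <-> mono f),
      (forall m k e, 0 < k <= m ->
         msC M (open_box_incl m k e) /\ msW M (open_box_incl m k e)),
      (forall m k e, 1 < m <= n.+1 -> 0 < k <= m ->
         msC M (mark_ext m k e) /\ msW M (mark_ext m k e)),
      (forall m, n < m -> msC M (marker m) /\ msW M (marker m)) &
      (forall (X Y : mcSet) (p : mmap X Y), fibrant M Y ->
         (forall m k e, 0 < k <= m -> llp (open_box_incl m k e) p) ->
         (forall m k e, 1 < m <= n.+1 -> 0 < k <= m -> llp (mark_ext m k e) p) ->
         (forall m, n < m -> llp (marker m) p) ->
         msF M p)].

Definition is_left_adjoint (Fo : mcSet -> mcSet)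
    (Fm : forall X Y : mcSet, mmap X Y -> mmap (Fo X) (Fo Y)) : Prop :=
  exists (Go : mcSet -> mcSet)
         (Gm : forall X Y : mcSet, mmap X Y -> mmap (Go X) (Go Y))
         (phi : forall X Y : mcSet, mmap (Fo X) Y -> mmap X (Go Y))
         (psi : forall X Y : mcSet, mmap X (Go Y) -> mmap (Fo X) Y),
    [/\ (forall X Y (f : mmap (Fo X) Y), homeq (psi _ _ (phi _ _ f)) f),
        (forall X Y (g : mmap X (Go Y)), homeq (phi _ _ (psi _ _ g)) g),
        (forall X' X Y (h : mmap X' X) (f : mmap (Fo X) Y),
            homeq (phi _ _ (mcompose f (Fm _ _ h))) (mcompose (phi _ _ f) h)) &
        (forall X Y Y' (k : mmap Y Y') (f : mmap (Fo X) Y),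
            homeq (phi _ _ (mcompose k f)) (mcompose (Gm _ _ k) (phi _ _ f)))].

Definition left_quillen (M N : ModelStructure) (Fo : mcSet -> mcSet)
    (Fm : forall X Y : mcSet, mmap X Y -> mmap (Fo X) (Fo Y)) : Prop :=
  [/\ is_left_adjoint Fm,
      (forall (X Y : mcSet) (f : mmap X Y), msC M f -> msC N (Fm _ _ f)) &
      (forall (X Y : mcSet) (f : mmap X Y), msC M f -> msW M f ->
          msC N (Fm _ _ f) /\ msW N (Fm _ _ f))].

(* Main.v *)
Require Import Defs.
From mathcomp Require Import all_boot.
From HB Require Import structures.
From mathcomp Require Import zify.
From Stdlib Require Import ProofIrrelevance.
Set Implicit Arguments. Unset Strict Implicit. Unset Printing Implicit Defensive.

Inductive expr := EC of bool | EV of nat | EO of bool & expr & expr.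
Lemma expr_eq_dec (x y : expr) : {x = y} + {x <> y}.
Proof. decide equality; exact: eq_comparable. Qed.
HB.instance Definition _ := hasDecEq.Build expr (compareP expr_eq_dec).

Fixpoint ev (s : seq bool) (e : expr) : bool :=
  match e with
  | EC b => b | EV i => nth false s i
  | EO b e1 e2 => if b then ev s e1 || ev s e2 else ev s e1 && ev s e2 end.

Fixpoint lv (e : expr) : seq nat :=
  match e with EC _ => [::] | EV i => [:: i] | EO _ e1 e2 => lv e1 ++ lv e2 end.

Definition LV (es : seq expr) := flatten (map lv es).

Lemma LV_cat a b : LV (a ++ b) = LV a ++ LV b.
Proof. by rewrite /LV map_cat flatten_cat. Qed.
Lemma LV_cons a b : LV (a :: b) = lv a ++ LV b.
Proof. by []. Qed.

Definition NF (q : nat) (es : seq expr) (g : seq bool -> seq bool) :=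
  [/\ sorted ltn (LV es), all (fun i => i < q) (LV es) &
      forall s, size s = q -> g s = map (ev s) es].

Lemma NF_sub q es es' g g' : subseq (LV es') (LV es) -> NF q es g ->
  (forall s, size s = q -> g' s = map (ev s) es') -> NF q es' g'.
Proof.
move=> Hs [H1 H2 H3] H4; split => //.
- exact: (subseq_sorted ltn_trans Hs H1).
- by apply/allP => x /(mem_subseq Hs) hx; move/allP: H2; apply.
Qed.

Lemma box_post m n h : is_box m n h -> forall l phi es, size es = m -> NF l es phi ->
  exists2 es', size es' = n & NF l es' (h \o phi).
Proof.
elim=> {m n h}.
- by move=> m l phi es Hs HN; exists es.
- move=> m k e Hk l phi es Hs HN.
  exists (take k.-1 es ++ EC e :: drop k.-1 es).
    by rewrite size_cat /= size_take size_drop Hs; case: ltnP; lia.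
  apply: (NF_sub (g := phi) _ HN).
    by rewrite LV_cat LV_cons /= -LV_cat cat_take_drop subseq_refl.
  move=> s Hs'; case: HN => _ _ H3.
  by rewrite /= H3 // /face_s map_cat /= map_take map_drop.
- move=> m i Hi l phi es Hs HN.
  exists (take i.-1 es ++ drop i es).
    by rewrite size_cat size_take size_drop Hs; case: ltnP; lia.
  apply: (NF_sub (g := phi) _ HN).
    rewrite LV_cat -[X in subseq _ (LV X)](cat_take_drop i.-1 es) LV_cat.
    apply: cat_subseq => //.
    have -> : drop i es = drop 1 (drop i.-1 es) by rewrite drop_drop; congr drop; lia.
    rewrite -[X in subseq _ (LV X)](cat_take_drop 1 (drop i.-1 es)) LV_cat.
    exact: suffix_subseq.
  move=> s Hs'; case: HN => _ _ H3.
  by rewrite /= H3 // /degen_s map_cat map_take map_drop.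
- move=> m i b Hi l phi es Hs HN.
  set x := nth (EC false) es i.-1; set y := nth (EC false) es i.
  have E : es = take i.-1 es ++ x :: y :: drop i.+1 es.
    rewrite -{1}(cat_take_drop i.-1 es); congr (_ ++ _).
    rewrite (drop_nth (EC false)); last by rewrite Hs; lia.
    have -> : i.-1.+1 = i by lia.
    by rewrite (drop_nth (EC false)) //; rewrite Hs; lia.
  exists (take i.-1 es ++ EO b x y :: drop i.+1 es).
    by rewrite size_cat /= size_take size_drop Hs; case: ltnP; lia.
  apply: (NF_sub (g := phi) _ HN).
    by rewrite [in LV es]E !LV_cat !LV_cons /= -!catA subseq_refl.
  move=> s Hs'; case: HN => _ _ H3.
  rewrite /= H3 // /conn_s map_cat map_take /= map_drop /x /y.
  rewrite (nth_map (EC false)); last by rewrite Hs; lia.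
  by rewrite (nth_map (EC false)) //; rewrite Hs; lia.
- move=> l0 m n g h _ IHg _ IHh l phi es Hs HN.
  have [es1 Hs1 HN1] := IHg l phi es Hs HN.
  exact: IHh l (g \o phi) es1 Hs1 HN1.
Qed.

Lemma box_nf q r g : is_box q r g -> exists2 es, size es = r & NF q es g.
Proof.
move=> H; apply: (box_post H (phi := id) (es := map EV (iota 0 q))).
  by rewrite size_map size_iota.
rewrite /NF.
have -> : LV (map EV (iota 0 q)) = iota 0 q.
  by rewrite /LV -map_comp /=; elim: (iota 0 q) => //= a s ->.
split.
- exact: iota_ltn_sorted.
- by apply/allP => x; rewrite mem_iota.
- move=> s Hs; rewrite -map_comp /=.
  by rewrite -{1}(mkseq_nth false s) Hs.
Qed.

Definition isC (e : expr) := if e is EC _ then true else false.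
Fixpoint cfree (e : expr) : bool :=
  match e with EC _ => false | EV _ => true | EO _ a b => cfree a && cfree b end.

Definition mkO b x y :=
  match x with
  | EC c => if c == b then EC b else y
  | _ => match y with EC c => if c == b then EC b else x | _ => EO b x y end end.

Fixpoint simp (e : expr) : expr :=
  match e with EO b e1 e2 => mkO b (simp e1) (simp e2) | _ => e end.

Lemma ev_mkO s b x y : ev s (mkO b x y) = ev s (EO b x y).
Proof.
case: x => [c|i|c x1 x2] /=.
- by case: b; case: c => /=.
- by case: y => [c|j|c y1 y2] //=; case: b; case: c => /=; rewrite ?orbT ?andbF ?orbF ?andbT.
- by case: y => [c'|j|c' y1 y2] //=; case: b; case: c' => /=; rewrite ?orbT ?andbF ?orbF ?andbT.
Qed.

Lemma lv_mkO b x y : subseq (lv (mkO b x y)) (lv x ++ lv y).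
Proof.
case: x => [c|i|c x1 x2]; rewrite /mkO.
- case: ifP => _. exact: sub0seq. exact: subseq_refl.
- case: y => [c|j|c y1 y2]. 
  case: ifP => _. exact: sub0seq. exact: prefix_subseq.
  exact: subseq_refl.
  exact: subseq_refl.
- case: y => [c'|j|c' y1 y2]; try exact: subseq_refl.
  by case: ifP => _; [exact: sub0seq | exact: prefix_subseq].
Qed.

Lemma ev_simp s e : ev s (simp e) = ev s e.
Proof. by elim: e => //= b e1 IH1 e2 IH2; rewrite ev_mkO /= IH1 IH2. Qed.

Lemma lv_simp e : subseq (lv (simp e)) (lv e).
Proof.
elim: e => [b|i|b e1 IH1 e2 IH2]; try exact: subseq_refl.
exact: subseq_trans (lv_mkO _ _ _) (cat_subseq IH1 IH2).
Qed.

Lemma simp_shape e : isC (simp e) || cfree (simp e).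
Proof.
elim: e => [b|i|b e1 IH1 e2 IH2] //=; rewrite /mkO; move: IH1 IH2.
case: (simp e1) => [c|i|c x1 x2]; case: (simp e2) => [c'|j|c' y1 y2] //= H1 H2;
  repeat case: ifP => _ //=; rewrite ?H1 ?H2 //.
Qed.

Lemma ev_agree s s' e : (forall i, i \in lv e -> nth false s i = nth false s' i) ->
  ev s e = ev s' e.
Proof.
elim: e => [b|i|b e1 IH1 e2 IH2] /= H.
- by [].
- by apply: H; rewrite inE.
- rewrite IH1 ?IH2 // => i Hi; apply: H; rewrite mem_cat Hi ?orbT //.
Qed.

Lemma cfree_lv e : cfree e -> lv e != [::].
Proof. by elim: e => //= b e1 IH1 e2 IH2 /andP [/IH1]; case: (lv e1). Qed.

Lemma cfree_one e : cfree e -> size (lv e) = 1 -> exists i, e = EV i.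
Proof.
case: e => [b|i|b e1 e2] //=; first by exists i.
move=> /andP [/cfree_lv H1 /cfree_lv H2]; rewrite size_cat.
by case: (lv e1) H1 => // a l _; case: (lv e2) H2 => // c l' _ /=; lia.
Qed.

Fixpoint sube (c e : expr) : Prop :=
  c = e \/ match e with EO _ e1 e2 => sube c e1 \/ sube c e2 | _ => False end.

Lemma sube_lv c e : sube c e -> {subset lv c <= lv e}.
Proof.
elim: e => [b|i|b e1 IH1 e2 IH2] /=; try by case=> [->|].
case=> [->|[/IH1 H|/IH2 H]] // x Hx; rewrite mem_cat ?H ?orbT //.
Qed.

Lemma cherry e : cfree e -> 1 < size (lv e) ->
  exists b a a' x y, sube (EO b (EV a) (EV a')) e /\ lv e = x ++ a :: a' :: y.
Proof.
elim: e => [b|i|b e1 IH1 e2 IH2] //= /andP [C1 C2].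
rewrite size_cat => Hs.
case: (ltnP 1 (size (lv e1))) => H1.
  have [b' [a [a' [x [y [S E]]]]]] := IH1 C1 H1.
  by exists b', a, a', x, (y ++ lv e2); split; [right; left|rewrite E -catA].
case: (ltnP 1 (size (lv e2))) => H2.
  have [b' [a [a' [x [y [S E]]]]]] := IH2 C2 H2.
  by exists b', a, a', (lv e1 ++ x), y; split; [right; right|rewrite E catA].
have /eqP E1 : size (lv e1) == 1.
  by move: (cfree_lv C1); case: (lv e1) H1 => // ? [].
have /eqP E2 : size (lv e2) == 1.
  by move: (cfree_lv C2); case: (lv e2) H2 => // ? [].
have [a ->] := cfree_one C1 E1; have [a' ->] := cfree_one C2 E2.
by exists b, a, a', [::], [::]; split; [left|].
Qed.

Lemma ev_sube s s' c e : sube c e -> uniq (lv e) ->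
  (forall j, j \in lv e -> j \notin lv c -> nth false s j = nth false s' j) ->
  ev s c = ev s' c -> ev s e = ev s' e.
Proof.
elim: e => [b|i|b e1 IH1 e2 IH2] /=.
- by case=> [-> _ _ ?|].
- by case=> [-> _ _ ?|].
case=> [-> _ _ ? //|]; rewrite cat_uniq => -[S|S] /and3P [U1 D U2] H Hc.
- rewrite (IH1 S U1) ?(@ev_agree s s' e2) //.
  + move=> j Hj; apply: H; first by rewrite mem_cat Hj orbT.
    apply/negP => /(sube_lv S) Hj1; move/hasPn: D => /(_ j Hj); by rewrite Hj1.
  + by move=> j Hj Hn; apply: H => //; rewrite mem_cat Hj.
- rewrite (IH2 S U2) ?(@ev_agree s s' e1) //.
  + move=> j Hj; apply: H; first by rewrite mem_cat Hj.
    apply/negP => /(sube_lv S) Hj1; move/hasPn: D => /(_ j Hj1); by rewrite Hj.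
  + by move=> j Hj Hn; apply: H => //; rewrite mem_cat Hj orbT.
Qed.

Lemma LV_mem es e : e \in es -> {subset lv e <= LV es}.
Proof.
elim: es => //= f es IH; rewrite inE => /orP [/eqP->|He] x Hx; rewrite LV_cons mem_cat.
  by rewrite Hx.
by rewrite (IH He x Hx) orbT.
Qed.

Lemma uniq_LV_same es f e x : uniq (LV es) -> f \in es -> e \in es ->
  x \in lv f -> x \in lv e -> f = e.
Proof.
elim: es => //= h es IH; rewrite LV_cons cat_uniq => /and3P [_ D U].
rewrite !inE => /orP [/eqP->|Hf] /orP [/eqP->|He] //.
- move=> Hx /(LV_mem He) Hx'; move/hasPn: D => /(_ x Hx'); by rewrite Hx.
- move=> /(LV_mem Hf) Hx' Hx; move/hasPn: D => /(_ x Hx'); by rewrite Hx.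
- exact: IH.
Qed.

Lemma size_LV_le q es : sorted ltn (LV es) -> all (fun i => i < q) (LV es) ->
  size (LV es) <= q.
Proof.
move=> S A; rewrite -(size_iota 0 q); apply: uniq_leq_size.
  exact: (sorted_uniq ltn_trans ltnn).
by move=> x Hx; move/allP: A => /(_ x Hx); rewrite mem_iota.
Qed.

Lemma count_ne_LV es : count (fun e => lv e != [::]) es <= size (LV es).
Proof.
elim: es => //= e es IH; rewrite LV_cons size_cat.
by case: (lv e) => //= a l; lia.
Qed.

Lemma fd_eq i s : i < size s ->
  face_s i.+1 false (degen_s i.+1 s) = take i s ++ false :: drop i.+1 s.
Proof.
move=> Hi; rewrite /face_s /degen_s /=.
rewrite take_cat size_take Hi ltnn subnn take0 cats0.
by rewrite drop_cat size_take Hi ltnn subnn drop0.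
Qed.

Lemma fd_nth i s j : i < size s -> j != i ->
  nth false (face_s i.+1 false (degen_s i.+1 s)) j = nth false s j.
Proof.
move=> Hi Hj; rewrite fd_eq // nth_cat size_take Hi.
case: ltnP => H1; first by rewrite nth_take.
have : i < j by rewrite ltn_neqAle H1 eq_sym Hj.
case: j Hj H1 => // j _ _ Hij; rewrite subSn //= nth_drop; congr nth; lia.
Qed.

Definition bop (b x y : bool) := if b then x || y else x && y.

Lemma fc_eq a b c s : a.+2 <= size s ->
  face_s a.+2 c (conn_s a.+1 b s) =
  take a s ++ bop b (nth false s a) (nth false s a.+1) :: c :: drop a.+2 s.
Proof.
move=> Ha; rewrite /face_s /conn_s /=.
have Hs : size (take a s) = a by rewrite size_take; case: ltnP; lia.
rewrite take_cat Hs ltnNge leqnSn /= subSn // subnn /=.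
rewrite drop_cat Hs ltnNge leqnSn /= subSn // subnn /=.
by rewrite take0 drop0 -catA.
Qed.

Lemma fc_nth a b c s j : a.+2 <= size s -> j != a -> j != a.+1 ->
  nth false (face_s a.+2 c (conn_s a.+1 b s)) j = nth false s j.
Proof.
move=> Ha H1 H2; rewrite fc_eq // nth_cat.
have Hs : size (take a s) = a by rewrite size_take; case: ltnP; lia.
rewrite Hs; case: ltnP => H3; first by rewrite nth_take.
have H4 : a.+1 < j by rewrite ltn_neqAle eq_sym H2 /= ltn_neqAle eq_sym H1 H3.
have -> : j - a = (j - a.+2).+2 by lia.
by rewrite /= nth_drop; congr nth; lia.
Qed.

Lemma fc_nth1 a b c s : a.+2 <= size s ->
  nth false (face_s a.+2 c (conn_s a.+1 b s)) a = bop b (nth false s a) (nth false s a.+1).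
Proof.
move=> Ha; rewrite fc_eq // nth_cat.
have Hs : size (take a s) = a by rewrite size_take; case: ltnP; lia.
by rewrite Hs ltnn subnn.
Qed.

Lemma fc_nth2 a b c s : a.+2 <= size s ->
  nth false (face_s a.+2 c (conn_s a.+1 b s)) a.+1 = c.
Proof.
move=> Ha; rewrite fc_eq // nth_cat.
have Hs : size (take a s) = a by rewrite size_take; case: ltnP; lia.
by rewrite Hs ltnNge leqnSn /= subSn // subnn.
Qed.

Lemma combC q m g k : is_box q m g -> q.+2 <= m ->
  exists j d, [/\ 0 < j <= m, j != k & forall s, size s = q -> nth false (g s) j.-1 = d].
Proof.
move=> H Hqm; have [es Hs [S A E]] := box_nf H.
set P := fun j => (j.+1 != k) && (lv (nth (EC false) es j) == [::]).
case: (boolP (has P (iota 0 m))) => [/hasP [j Hj /andP [Hk /eqP Hl]]|Hn].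
  rewrite mem_iota /= in Hj.
  exists j.+1, (ev [::] (nth (EC false) es j)); split => //.
  move=> s Hs'; rewrite E // /= (nth_map (EC false)) ?Hs //.
  by apply: ev_agree => i; rewrite Hl.
exfalso.
have C1 := count_ne_LV es.
have C2 := size_LV_le S A.
have C3 : count (fun e => lv e == [::]) es <= 1.
  rewrite -(mkseq_nth (EC false) es) /mkseq count_map Hs.
  rewrite (@eq_in_count _ _ (fun j => (j < m) && (lv (nth (EC false) es j) == [::]))); last first.
    by move=> j; rewrite mem_iota /= => ->.
  apply: (leq_trans (sub_count (a2 := pred1 k.-1) _ _)).
    move=> j /= /andP [Hjm Hj]; apply/eqP; move/hasPn: Hn => /(_ j).
    rewrite mem_iota /= Hjm => /(_ isT); rewrite /P /= Hj andbT negbK => /eqP <-.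
    by [].
  by rewrite (count_uniq_mem _ (iota_uniq 0 m)); case: (_ \in _).
have C4 := count_predC (fun e => lv e == [::]) es.
have C5 : count (predC (fun e => lv e == [::])) es = count (fun e => lv e != [::]) es by [].
lia.
Qed.

Definition isV (e : expr) := if e is EV _ then true else false.

Lemma LV_V es : all isV es -> map EV (LV es) = es.
Proof. by elim: es => //= -[b|i|b e1 e2] es IH //= /IH ->. Qed.

Lemma size_LV_CV es : all (fun e => isC e || isV e) es -> size (LV es) = count isV es.
Proof. by elim: es => //= -[b|i|b e1 e2] es IH //= /IH ->. Qed.

Lemma LV_simp es : subseq (LV (map simp es)) (LV es).
Proof.
elim: es => [|e es IH] //=; rewrite !LV_cons; exact: cat_subseq (lv_simp e) IH.
Qed.

Lemma combD q m g : is_box q m g -> m <= q ->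
  [\/ forall s, size s = q -> g s = s,
      exists2 i, 0 < i <= q & forall s, size s = q -> g s = g (face_s i false (degen_s i s))
    | exists b, exists2 i, 0 < i < q &
        forall s, size s = q -> g s = g (face_s i.+1 (~~ b) (conn_s i b s))].
Proof.
move=> H Hmq; have [es Hs HN] := box_nf H.
have HN2 : NF q (map simp es) g.
  apply: (NF_sub (LV_simp es) HN) => s Hs'; case: HN => _ _ E.
  by rewrite E // -map_comp; apply: eq_map => e /=; rewrite ev_simp.
have Hs2 : size (map simp es) = m by rewrite size_map.
have Sh : all (fun e => isC e || cfree e) (map simp es).
  by apply/allP => e /mapP [e0 _ ->]; exact: simp_shape.
move: (map simp es) Hs2 HN2 Sh; clear es Hs HN => es Hs [S A E] Sh.
have U : uniq (LV es) by exact: (sorted_uniq ltn_trans ltnn).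
case: (boolP (has (fun i => i \notin LV es) (iota 0 q))) => [/hasP [i Hi Hni]|Hall].
  rewrite mem_iota /= in Hi.
  apply: Or32; exists i.+1 => // s Hs'.
  have Hsz : size (face_s i.+1 false (degen_s i.+1 s)) = q.
    rewrite fd_eq ?Hs' // size_cat /= size_take size_drop Hs' Hi; lia.
  rewrite !E //; apply/eq_in_map => e He; apply: ev_agree => j Hj.
  rewrite fd_nth ?Hs' //; apply/negP => /eqP Eji; move: Hni.
  by rewrite -Eji (LV_mem He Hj).
have EL : LV es = iota 0 q.
  apply: (irr_sorted_eq ltn_trans ltnn S (iota_ltn_sorted 0 q)) => x.
  rewrite mem_iota /=; apply/idP/idP => [Hx|Hx].
    by move/allP: A => /(_ x Hx).
  by move/hasPn: Hall => /(_ x); rewrite mem_iota /= Hx negbK => ->.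
case: (boolP (has (fun e => 1 < size (lv e)) es)) => [/hasP [e He Hse]|Hn].
  have Ce : cfree e.
    by move/allP: Sh => /(_ e He); case: e He Hse.
  have [b [a [a' [x [y [Sc Ele]]]]]] := cherry Ce Hse.
  case/splitPr: He Hs S A E Sh U EL => p1 p2 Hs S A E Sh U EL.
  move: EL; rewrite LV_cat LV_cons Ele => EL.
  have EL' : (LV p1 ++ x) ++ a :: a' :: (y ++ LV p2) = iota 0 q.
    by rewrite -EL -!catA.
  set n0 := size (LV p1 ++ x).
  have Hsz : n0.+1 < q.
    have := size_iota 0 q; rewrite -EL' !size_cat /= /n0 size_cat; rewrite size_cat; lia.
  have Ea : a = n0.
    have := nth_iota 0 0 (ltnW Hsz); rewrite -EL'.
    by rewrite nth_cat /n0 ltnn subnn.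
  have Ea' : a' = n0.+1.
    have := nth_iota 0 0 Hsz; rewrite -EL'.
    by rewrite nth_cat /n0 ltnNge leqnSn /= subSn // subnn.
  subst a a'.
  have Ue : uniq (lv e).
    by move: U; rewrite LV_cat LV_cons !cat_uniq => /and3P [_ _ /andP []].
  have Ina : n0 \in lv e by rewrite Ele mem_cat inE eqxx orbT.
  have Ina' : n0.+1 \in lv e by rewrite Ele mem_cat !inE eqxx !orbT.
  apply: Or33; exists b, n0.+1 => // s Hs'.
  have Hsz' : size (face_s n0.+2 (~~ b) (conn_s n0.+1 b s)) = q.
    rewrite fc_eq ?Hs' // size_cat /= size_take size_drop Hs'; case: ltnP; lia.
  rewrite !E //; apply/eq_in_map => f Hf.
  have He' : e \in p1 ++ e :: p2 by rewrite mem_cat mem_head orbT.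
  have Hfe : (n0 \in lv f) || (n0.+1 \in lv f) -> f = e.
    case/orP => Hx.
      exact: (uniq_LV_same U Hf He' Hx Ina).
    exact: (uniq_LV_same U Hf He' Hx Ina').
  case: (boolP ((n0 \in lv f) || (n0.+1 \in lv f))) => [/Hfe ->|Hno].
    apply: (ev_sube Sc Ue).
      move=> j _; rewrite /= !inE negb_or => /andP [H1 H2].
      by rewrite fc_nth ?Hs'.
    rewrite /= fc_nth1 ?Hs' // fc_nth2 ?Hs' //.
    by rewrite /bop; case: (b); case: (nth false s n0); case: (nth false s n0.+1).
  apply: ev_agree => j Hj; rewrite fc_nth ?Hs' //.
    by apply/negP => /eqP Ej; move: Hno; rewrite -Ej Hj.
  by apply/negP => /eqP Ej; move: Hno; rewrite -Ej Hj orbT.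
apply: Or31 => s Hs'.
have CV : all (fun e => isC e || isV e) es.
  apply/allP => e He; move/allP: Sh => /(_ e He) /orP [->//|Ce].
  move/hasPn: Hn => /(_ e He); rewrite -leqNgt => H1.
  have /eqP H2 : size (lv e) == 1 by move: (cfree_lv Ce) H1; case: (lv e) => // ? [].
  by have [i ->] := cfree_one Ce H2.
have AV : all isV es.
  rewrite all_count eqn_leq count_size /=.
  by rewrite -size_LV_CV // EL size_iota Hs.
rewrite E // -(LV_V AV) EL -map_comp.
by rewrite -{2}(mkseq_nth false s) Hs'.
Qed.


Lemma is_box_size a b h : is_box a b h -> forall s, size s = a -> size (h s) = b.
Proof.
elim=> {a b h}.
- by [].
- move=> m k e Hk s Hs; rewrite /face_s size_cat /= size_take size_drop Hs; case: ltnP; lia.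
- move=> m i Hi s Hs; rewrite /degen_s size_cat size_take size_drop Hs; case: ltnP; lia.
- move=> m i e Hi s Hs; rewrite /conn_s size_cat /= size_take size_drop Hs; case: ltnP; lia.
- by move=> l m n g h _ IHg _ IHh s Hs /=; apply: IHh; apply: IHg.
Qed.

Definition mk_tup a b h (H : is_box a b h) (t : a.-tuple bool) : b.-tuple bool :=
  @Tuple b bool (h (val t)) (introT eqP (is_box_size H (size_tuple t))).

Lemma mk_box_proof a b h (H : is_box a b h) : is_box_map [ffun t => mk_tup H t].
Proof. by exists h => // t; rewrite ffunE. Qed.

Definition mk_boxHom a b h (H : is_box a b h) : boxHom a b := exist _ _ (mk_box_proof H).

Lemma mk_boxHomE a b h (H : is_box a b h) t : val (sval (mk_boxHom H) t) = h (val t).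
Proof. by rewrite /= ffunE. Qed.

Lemma boxHom_ext a b (f g : boxHom a b) : (forall t, val (sval f t) = val (sval g t)) -> f = g.
Proof. by move=> H; apply: boxHom_eq; apply/ffunP => t; apply: val_inj; apply: H. Qed.

Lemma is_box_pred a b h : 0 < b -> is_box a b h -> is_box a (b.-1).+1 h.
Proof. by move=> Hb; rewrite prednK. Qed.

Lemma fdeg j d s : 0 < j <= size s -> nth false s j.-1 = d -> face_s j d (degen_s j s) = s.
Proof.
move=> Hj Hn; rewrite /face_s /degen_s.
have Ht : size (take j.-1 s) = j.-1 by rewrite size_take; case: ltnP; lia.
rewrite take_cat Ht ltnn subnn take0 cats0 drop_cat Ht ltnn subnn drop0.
apply: (@eq_trans _ _ (take j.-1 s ++ drop j.-1 s)); last exact: cat_take_drop.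
congr (_ ++ _).
rewrite [drop j.-1 s](drop_nth false); last lia.
by rewrite Hn; congr (_ :: drop _ _); lia.
Qed.

Lemma box_of (a b : nat) (c : boxHom a b) :
  exists2 g, is_box a b g & forall t, val (sval c t) = g (val t).
Proof. exact: svalP c. Qed.

Lemma open_of_const m k e q (c : boxHom q m) g j d :
  is_box q m g -> (forall t, val (sval c t) = g (val t)) -> 0 < j <= m -> j != k ->
  (forall s, size s = q -> nth false (g s) j.-1 = d) -> in_open_box k e c.
Proof.
move=> Hg Hc Hj Hjk Hd.
have Hm : 0 < m by lia.
have Hf : is_box m.-1 m (face_s j d).
  by rewrite -{2}(prednK Hm); apply: box_face; lia.
have Hdg : is_box q m.-1 (degen_s j \o g).
  apply: box_comp Hg _; rewrite -{1}(prednK Hm); apply: box_degen; lia.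
exists j, d, (mk_boxHom Hf), (mk_boxHom Hdg); split => //.
- by apply/negP => /eqP [E]; move/eqP: Hjk.
- by move=> t; rewrite mk_boxHomE.
- apply: boxHom_ext => t; rewrite /= ffunE mk_boxHomE /= ffunE /= Hc.
  rewrite fdeg //; last by apply: Hd; exact: size_tuple.
  by rewrite (is_box_size Hg (size_tuple t)).
Qed.

Lemma high_cell m q (c : boxHom q m) : m <= q ->
  (forall t, val (sval c t) = val t) \/ degenerate (X := rep m) c.
Proof.
move=> Hmq; have [g Hg Hc] := box_of c.
case: (combD Hg Hmq) => [Hid|[i Hi Hs]|[b [i Hi Hs]]].
- by left => t; rewrite Hc Hid // size_tuple.
- right; have Hq : 0 < q by lia.
  have Hy' : is_box q.-1 m (g \o face_s i false).
    apply: (@box_comp q.-1 q.-1.+1 m); first by apply: box_face; lia.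
    by rewrite prednK.
  have Hf : is_box q q.-1 (degen_s i).
    by rewrite -{1}(prednK Hq); apply: box_degen; lia.
  exists q.-1, (mk_boxHom Hy'), (mk_boxHom Hf); split; last split.
  + apply: boxHom_ext => t; rewrite /= ffunE mk_boxHomE /= mk_boxHomE Hc /=.
    by rewrite -Hs // size_tuple.
  + lia.
  + by left; exists i; split => // t; rewrite mk_boxHomE.
- right; have Hq : 1 < q by lia.
  have Hy' : is_box q.-1 m (g \o face_s i.+1 (~~ b)).
    apply: (@box_comp q.-1 q.-1.+1 m); first by apply: box_face; lia.
    by rewrite prednK //; lia.
  have Hf : is_box q q.-1 (conn_s i b).
    have E1 : q = q.-2.+2 by lia.
    have E2 : q.-1 = q.-2.+1 by lia.
    rewrite {1}E1 E2; apply: box_conn; lia.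
  exists q.-1, (mk_boxHom Hy'), (mk_boxHom Hf); split; last split.
  + apply: boxHom_ext => t; rewrite /= ffunE mk_boxHomE /= mk_boxHomE Hc /=.
    by rewrite -Hs // size_tuple.
  + lia.
  + by right; exists i, b; split => // t; rewrite mk_boxHomE.
Qed.

(* The right adjoint: maximal n-trivial sub-object                      *)

Definition ntriv (n : nat) (Y : mcSet) k (y : cell Y k) : Prop :=
  forall p (f : boxHom p k), n < p -> marked (act f y).

Lemma ntriv_act n (Y : mcSet) p k (f : boxHom p k) (y : cell Y k) :
  ntriv n y -> ntriv n (act f y).
Proof. by move=> H p' g Hp; rewrite -act_comp; apply: H. Qed.

Definition Gcset (n : nat) (Y : mcSet) : cSet.
Proof.
refine (@CSet (fun k => {y : cell Y k | ntriv n y})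
  (fun p k f y => exist _ (act f (sval y)) (ntriv_act f (svalP y))) _ _).
- move=> k [y py]; apply: eq_sig_hprop => /=; first by move=> ? ? ?; apply: proof_irrelevance.
  exact: act_id.
- move=> l p k f g [y py]; apply: eq_sig_hprop => /=; first by move=> ? ? ?; apply: proof_irrelevance.
  exact: act_comp.
Defined.

Definition G (n : nat) (Y : mcSet) : mcSet.
Proof.
refine (@MCSet (Gcset n Y) (fun k y => marked (sval y)) _ _).
- by move=> [y py]; apply: marked_pos.
- move=> k [y py] [p [z [f [E [Hk Hd]]]]]; apply: marked_degen.
  by exists p, (sval z), f; split => //; rewrite -E.
Defined.

Lemma sig_eq (A : Type) (P : A -> Prop) (u v : {a : A | P a}) : sval u = sval v -> u = v.
Proof. apply: eq_sig_hprop => ? ? ?; apply: proof_irrelevance. Qed.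

Definition toG (n : nat) (B X : mcSet) (h : mmap B X)
  (H : forall k (x : cell B k), ntriv n (mcomp h k x)) : mmap B (G n X).
Proof.
refine (@MMap B (G n X) (fun k x => exist _ (mcomp h k x) (H k x)) _ _).
- by move=> p k f x; apply: sig_eq => /=; apply: mnat.
- by move=> k x hx; apply: mmark.
Defined.

Definition Gincl (n : nat) (X : mcSet) : mmap (G n X) X.
Proof.
refine (@MMap (G n X) X (fun k x => sval x) (fun _ _ _ _ => erefl) _).
by move=> k x hx.
Defined.

Lemma ntriv_comp n (X Y : mcSet) (f : mmap X Y) k (x : cell X k) :
  ntriv n x -> ntriv n (mcomp f k x).
Proof. by move=> H p g Hp; rewrite -mnat; apply: mmark; apply: H. Qed.

Definition Gmap (n : nat) (X Y : mcSet) (f : mmap X Y) : mmap (G n X) (G n Y) :=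
  @toG n (G n X) Y (mcompose f (Gincl n X)) (fun k x => ntriv_comp f (svalP x)).

Lemma tau_ntriv n (X Y : mcSet) (f : mmap (tau n X) Y) k (x : cell X k) :
  ntriv n (mcomp f k x).
Proof.
move=> p g Hp; rewrite -mnat; apply: mmark; by right.
Qed.

Definition phi_adj (n : nat) (X Y : mcSet) (f : mmap (tau n X) Y) : mmap X (G n Y).
Proof.
refine (@MMap X (G n Y) (fun k x => exist _ (mcomp f k x) (tau_ntriv f x)) _ _).
- by move=> p k g x; apply: sig_eq => /=; apply: mnat.
- by move=> k x hx; apply: mmark; left.
Defined.

Definition psi_adj (n : nat) (X Y : mcSet) (g : mmap X (G n Y)) : mmap (tau n X) Y.
Proof.
refine (@MMap (tau n X) Y (fun k x => sval (mcomp g k x)) _ _).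
- by move=> p k f x; rewrite mnat.
- move=> k x [hx|hk].
  + exact: (@mmark _ _ g k x hx).
  + have := svalP (mcomp g k x) k (bid k) hk; by rewrite act_id.
Defined.

Lemma tau_left_adjoint n : is_left_adjoint (@tau_map n).
Proof.
exists (G n), (Gmap n), (@phi_adj n), (@psi_adj n); split.
- by [].
- by move=> X Y g k x; apply: sig_eq.
- by move=> X' X Y h f k x; apply: sig_eq.
- by move=> X Y Y' h f k x; apply: sig_eq.
Qed.

Lemma deg_map (A B : mcSet) (f : mmap A B) k (x : cell A k) :
  degenerate x -> degenerate (mcomp f k x).
Proof.
case=> p [y [g [E [Hk Hd]]]]; exists p, (mcomp f p y), g; split => //.
by rewrite -E mnat.
Qed.

Definition minmark (Z : mcSet) : mcSet := mark_with (X := ucset Z) (fun _ _ => False).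

Definition demark (n : nat) (Z X : mcSet) (g : mmap Z (tau n X)) : mmap (minmark Z) X.
Proof.
refine (@MMap (minmark Z) X (fun k z => mcomp g k z) (@mnat _ _ g) _).
move=> k z [_ [Hd|[]]]; apply: marked_degen.
exact: (deg_map g (x := z) Hd).
Defined.

Lemma mono_tau n (X Y : mcSet) (f : mmap X Y) : mono f -> mono (tau_map n f).
Proof.
move=> Hf Z g h E k z.
have := Hf (minmark Z) (demark g) (demark h) E k z.
by [].
Qed.

Lemma unit_eq (a b : unit) : a = b.
Proof. by case: a; case: b. Qed.

Lemma F_homeq (M : ModelStructure) (X Y : mcSet) (p p' : mmap X Y) :
  homeq p p' -> msF M p -> msF M p'.
Proof.
move=> E Hp; have := ms_retract M (f := p') (g := p).
case.
- exists (mid X), (mid X), (mid Y), (mid Y); split => // k x /=; by rewrite E.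
- by move=> _ _; apply.
Qed.

Lemma fib_of_rlp (M : ModelStructure) (X Y : mcSet) (p : mmap X Y) :
  (forall (A B : mcSet) (i : mmap A B), msC M i -> msW M i -> llp i p) -> msF M p.
Proof.
move=> H.
have [Z [t [q [Ct Wt Fq Eq]]]] := ms_fact_tc M p.
have [h [H1 H2]] := H _ _ t Ct Wt (mid X) q (fun k x => esym (Eq k x)).
have := ms_retract M (f := p) (g := q); case.
- exists t, h, (mid Y), (mid Y); split => k x /=.
  + exact: H1.
  + by [].
  + exact: Eq.
  + by rewrite -H2.
- by move=> _ _; apply.
Qed.

Lemma fibrant_term (M : ModelStructure) : fibrant M term.
Proof.
apply: fib_of_rlp => A B i _ _ u v E.
by exists v; split => k x; apply: unit_eq.
Qed.

Lemma fibrant_of (M : ModelStructure) (X : mcSet) (q : mmap X term) :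
  msF M q -> fibrant M X.
Proof. by apply: F_homeq => k x; apply: unit_eq. Qed.

Lemma weq_of_llp (M : ModelStructure) (A B : mcSet) (i : mmap A B) :
  (forall (X Y : mcSet) (p : mmap X Y), msF M p -> fibrant M X -> fibrant M Y -> llp i p) ->
  msW M i.
Proof.
move=> H.
have [B' [j [q [Cj Wj Fq Eq]]]] := ms_fact_tc M (to_term B).
have FB' : fibrant M B' := fibrant_of Fq.
have [A' [k [p [Ck Wk Fp Ep]]]] := ms_fact_tc M (mcompose j i).
have FA' : fibrant M A'.
  apply: fib_of_rlp => T T' t Ct Wt u v E.
  have [h1 [H11 H12]] := ms_lift_tc Ct Wt FB' (u := mcompose p u) (v := to_term T')
    (fun _ _ => unit_eq _ _).
  have [h [Hh1 Hh2]] := ms_lift_tc Ct Wt Fp (u := u) (v := h1)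
    (fun k x => esym (H11 k x)).
  by exists h; split => // k' x; apply: unit_eq.
have [h1 [H11 H12]] := H _ _ p Fp FA' FB' k j Ep.
have [h [Hh1 Hh2]] := ms_lift_tc Cj Wj Fp (u := h1) (v := mid B') H12.
have Wji : msW M (mcompose j i).
  have := ms_retract M (f := mcompose j i) (g := k); case.
  - exists (mid A), (mid A), h, p; split => k' x /=.
    + by [].
    + exact: Hh2.
    + by rewrite -H11; have := Hh1 k' (mcomp i k' x).
    + by have := Ep k' x. 
  - by move=> W _ _; apply: W.
by case: (ms_2of3 M i j) => _ _; apply.
Qed.

Lemma llp_transfer n (A B X Y : mcSet) (f : mmap A B) (p : mmap X Y) :
  llp f (Gmap n p) -> llp (tau_map n f) p.
Proof.
move=> H u v E.
have E' : homeq (mcompose (Gmap n p) (phi_adj u)) (mcompose (phi_adj v) f).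
  by move=> k x; apply: sig_eq; exact: E k x.
have [h [H1 H2]] := H (phi_adj u) (phi_adj v) E'.
exists (psi_adj h); split => k x /=.
- by have := congr1 sval (H1 k x).
- by have := congr1 sval (H2 k x).
Qed.

Lemma dim_eq (a b : nat) (c : boxHom a b) : (forall t, val (sval c t) = val t) -> a = b.
Proof.
move=> H; have := congr1 size (H (nseq_tuple a false)).
by rewrite !size_tuple.
Qed.

Lemma llp_marker n (X Y : mcSet) (p : mmap X Y) m : n < m -> llp (marker m) (Gmap n p).
Proof.
move=> Hm u v E.
have Hmk : forall k (x : cell (cube_top m) k), marked x -> marked (mcomp u k x).
  move=> k x [Hk [Hd|Ht]].
  - by apply: (@mmark _ _ u k x); split => //; left.
  - have Ek := dim_eq Ht; subst k.
    by have := svalP (mcomp u m x) m (bid m) Hm; rewrite act_id.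
exists (@MMap (cube_top m) (G n X) (fun k x => mcomp u k x) (@mnat _ _ u) Hmk).
split => k x //; exact: E k x.
Qed.

Lemma llp_markext n (M : ModelStructure) (X Y : mcSet) (p : mmap X Y) m k e :
  msC M (mark_ext m k e) -> msW M (mark_ext m k e) -> msF M p ->
  llp (mark_ext m k e) (Gmap n p).
Proof.
move=> C W F u v E.
have [h0 [H1 H2]] := ms_lift_tc C W F (u := mcompose (Gincl n X) u)
  (v := mcompose (Gincl n Y) v) (fun q x => congr1 sval (E q x)).
have Hn : forall q (x : cell (cube_k'' m k e) q), ntriv n (mcomp h0 q x).
  by move=> q x; rewrite (H1 q x); exact: svalP (mcomp u q x).
exists (toG Hn); split => q x; apply: sig_eq => /=.
- exact: H1 q x.
- exact: H2 q x.
Qed.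

Lemma open_of_face m k e q (c : boxHom q m) j d : (j, d) != (k, e) -> 0 < j <= m ->
  q.+1 = m -> (forall t, val (sval c t) = face_s j d (val t)) -> in_open_box k e c.
Proof.
move=> Hjd Hj Hq Hc.
have Hm : 0 < m by lia.
have Hf : is_box m.-1 m (face_s j d).
  by rewrite -{2}(prednK Hm); apply: box_face; lia.
have Hid : is_box q m.-1 id by rewrite -Hq /=; exact: box_id.
exists j, d, (mk_boxHom Hf), (mk_boxHom Hid); split => //.
- by move=> t; rewrite mk_boxHomE.
- by apply: boxHom_ext => t; rewrite /= ffunE mk_boxHomE /= ffunE /= Hc.
Qed.

Lemma llp_openbox n (M : ModelStructure) (X Y : mcSet) (p : mmap X Y) m k e :
  0 < k <= m ->
  msC M (open_box_incl m k e) -> msW M (open_box_incl m k e) ->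
  (1 < m -> msC M (mark_ext m k e) /\ msW M (mark_ext m k e)) ->
  msF M p -> llp (open_box_incl m k e) (Gmap n p).
Proof.
move=> Hk C W ME F u v E.
have [l [H1 H2]] := ms_lift_tc C W F (u := mcompose (Gincl n X) u)
  (v := mcompose (Gincl n Y) v) (fun q x => congr1 sval (E q x)).
have HA : forall q (c : boxHom q m) (Hin : in_open_box k e c), n < q ->
    marked (mcomp l q c).
  move=> q c Hin Hq.
  have /= -> := H1 q (exist _ c Hin).
  by have := svalP (mcomp u q (exist _ c Hin)) q (bid q) Hq; rewrite act_id.
have HM : forall q (c : boxHom q m), n < q -> marked (mcomp l q c).
  move=> q c Hq.
  have [g Hg Hc] := box_of c.
  case: (ltnP q.+1 m) => Hqm.
    have [j [d [Hj Hjk Hd]]] := combC k Hg Hqm.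
    exact: HA _ _ (open_of_const e Hg Hc Hj Hjk Hd) Hq.
  case: (ltnP q m) => Hqm'.
    have Hm1 : 1 < m by lia.
    have [CE WE] := ME Hm1.
    have Hmk1 : forall q' (x : cell (cube_k' m k e) q'), marked x -> marked (mcomp l q' x).
      move=> q' x [Hq' [Hd | [Hc' | [j [d [Hjd [_ Hall Hsz Hv]]]]]]].
      - by apply: (@mmark _ _ l q' x); split => //; left.
      - by apply: (@mmark _ _ l q' x); split => //; right.
      - move: Hall => /= /andP [Hj _]; move: Hsz => /= Hsz.
        apply: HA; last lia.
        apply: (open_of_face Hjd Hj); first lia.
        by move=> t; rewrite Hv.
    pose u1 := @MMap (cube_k' m k e) X (fun q x => mcomp l q x) (@mnat _ _ l) Hmk1.
    have Hmk2 : forall q' (x : cell (cube_k'' m k e) q'), marked x ->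
        marked (sval (mcomp v q' x)).
      move=> q' x [Hl|Hdim].
      - exact: (@mmark _ _ v q' x Hl).
      - have Hq' : n < q' by lia.
        by have := svalP (mcomp v q' x) q' (bid q') Hq'; rewrite act_id.
    have Hnat2 : forall a b (f : boxHom a b) (x : cell (cube_k'' m k e) b),
        sval (mcomp v a (act f x)) = act f (sval (mcomp v b x)).
      by move=> a b f x; rewrite mnat.
    pose v1 := @MMap (cube_k'' m k e) Y (fun q x => sval (mcomp v q x)) Hnat2 Hmk2.
    have [h1 [K1 K2]] := ms_lift_tc CE WE F (u := u1) (v := v1) (fun q x => H2 q x).
    have Mc : @marked (cube_k'' m k e) q c by right; lia.
    have := @mmark _ _ h1 q c Mc.
    by have /= -> := K1 q c.
  case: (high_cell c Hqm') => [Hid|Hd]; apply: (@mmark _ _ l q c); split; try lia.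
  - right; exists [::]; split => //; split => //.
    by rewrite addn0; apply: dim_eq.
  - by left.
have Hn : forall q (x : cell (cube_k m k e) q), ntriv n (mcomp l q x).
  by move=> q x p' f Hp; rewrite -mnat; apply: HM.
exists (toG Hn); split => q x; apply: sig_eq => /=.
- exact: H1 q x.
- exact: H2 q x.
Qed.

Lemma llp_toterm n (A B Y : mcSet) (i : mmap A B) :
  llp i (Gmap n (to_term Y)) -> llp i (to_term (G n Y)).
Proof.
move=> H u v E.
have Hn : forall k (x : cell B k), ntriv n (mcomp (to_term B) k x).
  move=> k x p f Hp /=; lia.
have [h [H1 H2]] := H u (toG Hn) (fun k x => sig_eq (unit_eq _ _)).
by exists h; split => // k x; apply: unit_eq.
Qed.

Theorem proposition3p6 (n : nat) (Mn M : ModelStructure) :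
  is_ntriv_comical n Mn -> is_comical M ->
  @left_quillen Mn M (tau n) (@tau_map n).
Proof.
move=> [HnC HnOB HnME HnMK HnF] [HC HOB HME HF].
have GF : forall (X Y : mcSet) (p : mmap X Y), msF M p -> fibrant M Y ->
    msF Mn (Gmap n p).
  move=> X Y p Fp FY; apply: (HnF).
  - apply: (HnF); first exact: fibrant_term.
    + move=> m k e Hk; apply: llp_toterm.
      have [C W] := HOB m k e Hk.
      apply: (llp_openbox Hk C W _ FY) => Hm; exact: HME.
    + move=> m k e Hm Hk; apply: llp_toterm.
      have [C W] := HME m k e (proj1 (andP Hm)) Hk.
      exact: llp_markext C W FY.
    + by move=> m Hm; apply: llp_toterm; apply: llp_marker.
  - move=> m k e Hk; have [C W] := HOB m k e Hk.
    apply: (llp_openbox Hk C W _ Fp) => Hm; exact: HME.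
  - move=> m k e Hm Hk; have [C W] := HME m k e (proj1 (andP Hm)) Hk.
    exact: llp_markext C W Fp.
  - by move=> m Hm; apply: llp_marker.
split.
- exact: tau_left_adjoint.
- by move=> X Y f /HnC Hm; apply/HC; exact: mono_tau.
- move=> X Y f Cf Wf; split; first by apply/HC; apply: mono_tau; apply/HnC.
  apply: weq_of_llp => X' Y' p Fp FX FY.
  apply: llp_transfer; apply: (ms_lift_tc Cf Wf); exact: GF.
Qed.
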